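(* Let $R$ be a commutative ring, $M$ a faithful primeful $R$-module having at least one prime submodule, $X=\mathrm{Spec}(M)$, and $N$ an $R$-module. For every $f\in R$, the module $\mathcal{A}(N,M)(X_f)$ is isomorphic to the localization $N_f$.
   Context: For a submodule $L$ of an $R$-module $M$, $(L:M)=\{r\in R\mid rM\subseteq L\}$. A submodule $P$ of $M$ is prime if $P\neq M$ and whenever $rm\in P$ ($r\in R$, $m\in M$) then $r\in (P:M)$ or $m\in P$. $\mathrm{Spec}(M)$ is the set of prime submodules. $M$ is faithful if $\mathrm{Ann}_R(M)=0$; primeful if $M=0$ or $\mathrm{Spec}(M)\to\mathrm{Spec}(R/\mathrm{Ann}(M))$, $P\mapsto(P:M)/\mathrm{Ann}(M)$, is surjective. For $L\le M$, $V(L)=\{P\in X\mid (P:M)\supseteq (L:M)\}$; these are the closed sets of the Zariski topology. For $r\in R$, $X_r=X\setminus V(rM)$. For open $U\subseteq X$, $\mathrm{Supp}(U)=\{(P:M)\mid P\in U\}$. $\mathcal{A}(N,M)(U)$ is the $R$-module of families $(\gamma_{\mathfrak p})_{\mathfrak p\in\mathrm{Supp}(U)}\in\prod_{\mathfrak p\in\mathrm{Supp}(U)}N_{\mathfrak p}$ such that for each $Q\in U$ there exist an open neighbourhood $W\subseteq U$ of $Q$ and $s\in R$, $m\in N$ with $s\notin(P:M)$ and $\gamma_{(P:M)}=m/s$ for every $P\in W$. $N_f$ is the localization of $N$ at $\{f^n\mid n\ge0\}$. *)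

(* Defs.v *)
(* Modules over a commutative ring R are MathComp lmodType R
   (R : comPzRingType, so the zero ring is not excluded a priori).
   Localizations and the module of sections A(N,M)(U) are presented as
   "setoid modules": a carrier of representatives, a validity predicate,
   an equivalence relation (the quotient is the actual module) and the
   module operations on representatives. *)
From mathcomp Require Import all_boot all_algebra.
Set Implicit Arguments. Unset Strict Implicit. Unset Printing Implicit Defensive.
Import GRing.Theory.
Local Open Scope ring_scope.

Definition is_submodule (R : pzRingType) (M : lmodType R) (L : M -> Prop) : Prop :=
  L 0 /\ (forall x y, L x -> L y -> L (x + y)) /\ (forall (r : R) x, L x -> L (r *: x)).

Definition colon (R : pzRingType) (M : lmodType R) (L : M -> Prop) : R -> Prop :=
  fun r => forall m : M, L (r *: m).

Definition prime_submodule (R : pzRingType) (M : lmodType R) (P : M -> Prop) : Prop :=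
  is_submodule P /\ (exists m, ~ P m) /\
  (forall (r : R) (m : M), P (r *: m) -> colon P r \/ P m).

Definition Ann (R : pzRingType) (M : lmodType R) : R -> Prop :=
  fun r => forall m : M, r *: m = 0.

Definition faithful (R : pzRingType) (M : lmodType R) : Prop :=
  forall r : R, Ann M r -> r = 0.

Definition is_ideal (R : pzRingType) (I : R -> Prop) : Prop :=
  I 0 /\ (forall x y, I x -> I y -> I (x + y)) /\
  (forall a x, I x -> I (a * x)) /\ (forall a x, I x -> I (x * a)).

Definition prime_ideal (R : pzRingType) (p : R -> Prop) : Prop :=
  is_ideal p /\ ~ p 1 /\ (forall a b, p (a * b) -> p a \/ p b).

(* primeful: M = 0, or P |-> (P:M)/Ann(M) is onto Spec(R/Ann(M)).  Prime
   ideals of R/Ann(M) are identified (correspondence theorem) with prime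
   ideals p of R containing Ann(M); (P:M)/Ann(M) = p/Ann(M) iff (P:M) = p. *)
Definition primeful (R : pzRingType) (M : lmodType R) : Prop :=
  (forall m : M, m = 0) \/
  (forall p : R -> Prop, prime_ideal p -> (forall r, Ann M r -> p r) ->
     exists P : M -> Prop, prime_submodule P /\ (forall r, colon P r <-> p r)).

Definition V (R : pzRingType) (M : lmodType R) (L : M -> Prop) : (M -> Prop) -> Prop :=
  fun P => prime_submodule P /\ (forall r, colon L r -> colon P r).

Definition zopen (R : pzRingType) (M : lmodType R) (U : (M -> Prop) -> Prop) : Prop :=
  (forall P, U P -> prime_submodule P) /\
  exists L : M -> Prop, is_submodule L /\
    (forall P, prime_submodule P -> (U P <-> ~ V L P)).

Definition scaled_module (R : pzRingType) (M : lmodType R) (r : R) : M -> Prop :=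
  fun x => exists m : M, x = r *: m.

Definition Xbasic (R : pzRingType) (M : lmodType R) (r : R) : (M -> Prop) -> Prop :=
  fun P => prime_submodule P /\ ~ V (@scaled_module R M r) P.

Definition Supp (R : pzRingType) (M : lmodType R) (U : (M -> Prop) -> Prop)
  : (R -> Prop) -> Prop :=
  fun p => exists P, U P /\ p = colon P.

Record smod (R : pzRingType) := SMod {
  scarrier : Type;
  svalid : scarrier -> Prop;
  seqv : scarrier -> scarrier -> Prop;
  szero : scarrier;
  sadd : scarrier -> scarrier -> scarrier;
  sscale : R -> scarrier -> scarrier
}.

Definition smod_iso (R : pzRingType) (A B : smod R) : Prop :=
  exists phi : scarrier A -> scarrier B,
    (forall x, svalid x -> svalid (phi x)) /\
    (forall x y, svalid x -> svalid y -> seqv x y -> seqv (phi x) (phi y)) /\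
    (forall x y, svalid x -> svalid y ->
        seqv (phi (sadd x y)) (sadd (phi x) (phi y))) /\
    (forall (r : R) x, svalid x -> seqv (phi (sscale r x)) (sscale r (phi x))) /\
    (forall x y, svalid x -> svalid y -> seqv (phi x) (phi y) -> seqv x y) /\
    (forall z, svalid z -> exists x, svalid x /\ seqv (phi x) z).

Definition loc_eq (R : comPzRingType) (N : lmodType R) (S : R -> Prop)
  (x y : N * R) : Prop :=
  exists t, S t /\ t *: (y.2 *: x.1 - x.2 *: y.1) = 0.

Definition loc_add (R : comPzRingType) (N : lmodType R) (x y : N * R) : N * R :=
  (y.2 *: x.1 + x.2 *: y.1, x.2 * y.2).

Definition loc_scale (R : comPzRingType) (N : lmodType R) (r : R) (x : N * R) : N * R :=
  (r *: x.1, x.2).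

Definition loc_mod (R : comPzRingType) (N : lmodType R) (S : R -> Prop) : smod R :=
  @SMod R (N * R) (fun x => S x.2) (loc_eq S) (0, 1)
        (@loc_add R N) (@loc_scale R N).

Definition powers (R : pzRingType) (f : R) : R -> Prop := fun s => exists n, s = f ^+ n.
Definition compl (R : pzRingType) (p : R -> Prop) : R -> Prop := fun s => ~ p s.

Definition Nf (R : comPzRingType) (N : lmodType R) (f : R) : smod R :=
  loc_mod N (powers f).

(* a family gamma = (gamma_p)_{p in Supp U}, gamma_p in N_p given by a
   representative, satisfying the local-fraction condition *)
Definition is_section (R : comPzRingType) (M N : lmodType R)
  (U : (M -> Prop) -> Prop) (gamma : (R -> Prop) -> N * R) : Prop :=
  (forall p, Supp U p -> ~ p (gamma p).2) /\
  (forall Q, U Q -> exists W : (M -> Prop) -> Prop,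
      zopen W /\ W Q /\ (forall P, W P -> U P) /\
      exists (s : R) (m : N), forall P, W P ->
        ~ colon P s /\ loc_eq (compl (colon P)) (gamma (colon P)) (m, s)).

Definition sections_mod (R : comPzRingType) (M N : lmodType R)
  (U : (M -> Prop) -> Prop) : smod R :=
  @SMod R ((R -> Prop) -> N * R)
    (is_section U)
    (fun g g' => forall p, Supp U p -> loc_eq (compl p) (g p) (g' p))
    (fun _ => (0, 1))
    (fun g g' p => loc_add (g p) (g' p))
    (fun r g p => loc_scale r (g p)).

(* Main.v *)
Set Warnings "-all".
Require Import Defs.
From mathcomp Require Import all_boot all_algebra.
From mathcomp Require Import boolp classical_sets.
From mathcomp Require Import ring.
Set Implicit Arguments. Unset Strict Implicit. Unset Printing Implicit Defensive.
Import GRing.Theory.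
Local Open Scope ring_scope.

Section LC.
Variables (R : comPzRingType) (N : lmodType R).
Lemma lc_intro (u v w z : N) (P : N -> N -> N -> N -> Prop) :
  (forall L : R -> R -> R -> R -> N,
     (forall a b c d a' b' c' d', L a b c d + L a' b' c' d' = L (a + a') (b + b') (c + c') (d + d')) ->
     (forall a b c d, - L a b c d = L (- a) (- b) (- c) (- d)) ->
     (forall r a b c d, r *: L a b c d = L (r * a) (r * b) (r * c) (r * d)) ->
     L 0 0 0 0 = 0 ->
     P (L 1 0 0 0) (L 0 1 0 0) (L 0 0 1 0) (L 0 0 0 1)) -> P u v w z.
Proof.
move=> H.
pose L := fun a b c d => (a *: u + b *: v) + (c *: w + d *: z).
have LD : forall a b c d a' b' c' d', L a b c d + L a' b' c' d' = L (a + a') (b + b') (c + c') (d + d').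
  move=> a b c d a' b' c' d'; rewrite /L addrACA [X in X + _]addrACA [X in _ + X]addrACA.
  by rewrite !scalerDl.
have LN : forall a b c d, - L a b c d = L (- a) (- b) (- c) (- d).
  by move=> a b c d; rewrite /L !opprD !scaleNr.
have LZ : forall r a b c d, r *: L a b c d = L (r * a) (r * b) (r * c) (r * d).
  by move=> r a b c d; rewrite /L !scalerDr !scalerA.
have L0 : L 0 0 0 0 = 0 by rewrite /L !scale0r !addr0.
have := H L LD LN LZ L0.
have -> : L 1 0 0 0 = u by rewrite /L !scale0r scale1r !addr0.
have -> : L 0 1 0 0 = v by rewrite /L !scale0r scale1r !addr0 add0r.
have -> : L 0 0 1 0 = w by rewrite /L !scale0r scale1r !addr0 add0r.
have -> : L 0 0 0 1 = z by rewrite /L !scale0r scale1r !addr0 !add0r.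
done.
Qed.
End LC.

Ltac lcsolve u v w z :=
  pattern u, v, w, z; apply: lc_intro;
  let L := fresh "L" in let LD := fresh "LD" in let LN := fresh "LN" in
  let LZ := fresh "LZ" in let L0 := fresh "L0" in
  intros L LD LN LZ L0;
  rewrite -?L0; repeat progress rewrite ?LN ?LZ ?LD; congr L; ring.

Section PE.
Variable R : comPzRingType.

Definition good (I : R -> Prop) (e : R) (J : R -> Prop) :=
  is_ideal J /\ (forall x, I x -> J x) /\ (forall k, ~ J (e ^+ k)).

Lemma prime_exists (I : R -> Prop) (e : R) :
  is_ideal I -> (forall k, ~ I (e ^+ k)) ->
  exists p, prime_ideal p /\ (forall x, I x -> p x) /\ (forall k, ~ p (e ^+ k)).
Proof.
move=> hI hIe.
pose P := fun J : set R => J = set0 \/ good I e J.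
have [A [PA Amax]] : exists A, P A /\ forall B, (A `<` B)%classic -> ~ P B.
  apply: Zorn_bigcup => F FP Ftot.
  case: (pselect (exists X, F X /\ X <> set0)) => [[X0 [FX0 X0n]]|hno]; last first.
    left; rewrite predeqE => x; split => //; case=> X FX Xx.
    apply: hno; exists X; split => //; move=> X0; by rewrite X0 in Xx.
  have gX : forall X, F X -> X <> set0 -> good I e X.
    by move=> X FX Xn; case: (FP X FX).
  have g0 := gX X0 FX0 X0n.
  have gmem : forall X x, F X -> X x -> good I e X.
    move=> X x FX Xx; apply: gX => // X0'; by rewrite X0' in Xx.
  right; split; [split; [|split; [|split]]|split].
  - exists X0 => //; by case: g0 => [[]].
  - move=> x y [X FX Xx] [Y FY Yy].
    case: (Ftot X Y FX FY) => [XY|YX].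
    + exists Y => //; have [[_ [hadd _]] _] := gmem Y y FY Yy; exact: hadd (XY _ Xx) Yy.
    + exists X => //; have [[_ [hadd _]] _] := gmem X x FX Xx; exact: hadd Xx (YX _ Yy).
  - move=> a x [X FX Xx]; exists X => //.
    have [[_ [_ [hm _]]] _] := gmem X x FX Xx; exact: hm.
  - move=> a x [X FX Xx]; exists X => //.
    have [[_ [_ [_ hm]]] _] := gmem X x FX Xx; exact: hm.
  - move=> x Ix; exists X0 => //; by case: g0 => _ [h _]; apply: h.
  - move=> k [X FX Xk]; have [_ [_ h]] := gmem X _ FX Xk; exact: h Xk.
have gI : good I e I by split => //; split.
case: PA => [A0|gA].
  exfalso; apply: (Amax I); last by right.
  rewrite A0; split => // h; case: hI => I0 _; exact: (h 0 I0).
exists A; split; last by case: gA => _ [].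
case: gA => [hA [hIA hAe]].
split => //; split; first by move=> A1; apply: (hAe 0%N); rewrite expr0.
move=> a b Aab; apply: contrapT => /not_orP [na nb].
have ext : forall c, ~ A c -> exists k y r, A y /\ e ^+ k = y + r * c.
  move=> c nc.
  pose B := fun x => exists y r, A y /\ x = y + r * c.
  have AB : forall x, A x -> B x by move=> x Ax; exists x, 0; split => //; rewrite mul0r addr0.
  have PB : ~ P B.
    apply: Amax; split; first exact: AB.
    move=> h; apply: nc; apply: h; exists 0, 1; split; [by case: hA|by rewrite mul1r add0r].
  have : ~ good I e B by move=> g; apply: PB; right.
  move=> /not_andP [hB|/not_andP [hB|hB]].
  - exfalso; apply: hB; case: hA => [A0 [Aadd [Am Am']]].
    split; [exists 0, 0; split => //; by rewrite mul0r addr0|split; [|split]].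
    + move=> x y [y1 [r1 [Ay1 ->]]] [y2 [r2 [Ay2 ->]]]; exists (y1 + y2), (r1 + r2); split; first exact: Aadd.
      ring.
    + move=> a' x [y1 [r1 [Ay1 ->]]]; exists (a' * y1), (a' * r1); split; first exact: Am.
      ring.
    + move=> a' x [y1 [r1 [Ay1 ->]]]; exists (y1 * a'), (r1 * a'); split; first exact: Am'.
      ring.
  - by exfalso; apply: hB => x Ix; apply: AB; apply: hIA.
  - case: (pselect (exists k, B (e ^+ k))) => [[k [y [r [Ay ey]]]]|hn].
      by exists k, y, r.
    by exfalso; apply: hB => k Bk; apply: hn; exists k.
have [k [y [r [Ay ek]]]] := ext a na.
have [l [y' [r' [Ay' el]]]] := ext b nb.
apply: (hAe (k + l)%N); rewrite exprD ek el.
case: hA => [A0 [Aadd [Am Am']]].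
have -> : (y + r * a) * (y' + r' * b) = y * (y' + r' * b) + ((r * a) * y' + (r * r') * (a * b)) by ring.
apply: (Aadd); first by apply: Am'.
apply: (Aadd); [exact: Am|exact: Am].
Qed.
End PE.

Section Loc.
Variables (R : comPzRingType) (N : lmodType R).
Implicit Types (p S : R -> Prop) (x y z : N * R).

Lemma prime_nmul p a b : prime_ideal p -> ~ p a -> ~ p b -> ~ p (a * b).
Proof. by move=> [_ [_ hp]] na nb /hp []. Qed.

Lemma prime_nexp p a k : prime_ideal p -> ~ p a -> ~ p (a ^+ k).
Proof.
move=> hp na; elim: k => [|k IH]; first by rewrite expr0; case: hp => _ [].
by rewrite exprS; apply: prime_nmul.
Qed.

Lemma loc_eq_refl S x : S 1 -> loc_eq S x x.
Proof. by move=> S1; exists 1; split => //; rewrite subrr scaler0. Qed.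

Lemma loc_eq_sym S x y : loc_eq S x y -> loc_eq S y x.
Proof.
case=> t [St e]; exists t; split => //.
have -> : t *: (x.2 *: y.1 - y.2 *: x.1) = - (t *: (y.2 *: x.1 - x.2 *: y.1)) by lcsolve x.1 y.1 x.1 x.1.
by rewrite e oppr0.
Qed.

Lemma loc_eq_trans p x y z : prime_ideal p -> ~ p y.2 ->
  loc_eq (compl p) x y -> loc_eq (compl p) y z -> loc_eq (compl p) x z.
Proof.
move=> hp ny [t1 [n1 e1]] [t2 [n2 e2]]; exists (t1 * t2 * y.2); split.
  by apply: prime_nmul => //; apply: prime_nmul.
have -> : (t1 * t2 * y.2) *: (z.2 *: x.1 - x.2 *: z.1) = (t2 * z.2) *: (t1 *: (y.2 *: x.1 - x.2 *: y.1)) + (t1 * x.2) *: (t2 *: (z.2 *: y.1 - y.2 *: z.1)) by lcsolve x.1 y.1 z.1 x.1.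
by rewrite e1 e2 !scaler0 addr0.
Qed.

Lemma loc_add_eq p x x' y y' : prime_ideal p ->
  loc_eq (compl p) x x' -> loc_eq (compl p) y y' -> loc_eq (compl p) (loc_add x y) (loc_add x' y').
Proof.
move=> hp [t1 [n1 e1]] [t2 [n2 e2]]; exists (t1 * t2); split; first exact: prime_nmul.
rewrite /loc_add /=.
have -> : (t1 * t2) *: ((x'.2 * y'.2) *: (y.2 *: x.1 + x.2 *: y.1) - (x.2 * y.2) *: (y'.2 *: x'.1 + x'.2 *: y'.1))
  = (t2 * y.2 * y'.2) *: (t1 *: (x'.2 *: x.1 - x.2 *: x'.1)) + (t1 * x.2 * x'.2) *: (t2 *: (y'.2 *: y.1 - y.2 *: y'.1))
  by lcsolve x.1 x'.1 y.1 y'.1.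
by rewrite e1 e2 !scaler0 addr0.
Qed.

Lemma loc_scale_eq S r x x' : loc_eq S x x' -> loc_eq S (loc_scale r x) (loc_scale r x').
Proof.
move=> [t [St e]]; exists t; split => //; rewrite /loc_scale /=.
have -> : t *: (x'.2 *: (r *: x.1) - x.2 *: (r *: x'.1)) = r *: (t *: (x'.2 *: x.1 - x.2 *: x'.1)) by lcsolve x.1 x'.1 x.1 x.1.
by rewrite e scaler0.
Qed.

Lemma pow_loc p f x y : prime_ideal p -> ~ p f -> loc_eq (powers f) x y -> loc_eq (compl p) x y.
Proof. by move=> hp nf [t [[k ->] e]]; exists (f ^+ k); split => //; apply: prime_nexp. Qed.

Lemma ann_pow (e : R) (v : N) :
  (forall p, prime_ideal p -> ~ p e -> exists t, ~ p t /\ t *: v = 0) -> exists k, e ^+ k *: v = 0.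
Proof.
move=> H; apply: contrapT => hn.
have hI : is_ideal (fun r : R => r *: v = 0).
  split; first by rewrite scale0r.
  split; first by move=> a b ea eb; rewrite scalerDl ea eb addr0.
  split; first by move=> a b eb; rewrite -scalerA eb scaler0.
  by move=> a b eb; rewrite mulrC -scalerA eb scaler0.
have [p [hp [hIp hpe]]] := prime_exists hI (fun k ek => hn (ex_intro _ k ek)).
have npe : ~ p e by move=> pe; apply: (hpe 1%N); rewrite expr1.
have [t [nt et]] := H p hp npe.
exact: nt (hIp _ et).
Qed.

Lemma loc_inj f x y : (forall p, prime_ideal p -> ~ p f -> loc_eq (compl p) x y) -> loc_eq (powers f) x y.
Proof.
move=> H; have [k ek] := ann_pow (e := f) (v := y.2 *: x.1 - x.2 *: y.1) (fun p hp nf => H p hp nf).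
by exists (f ^+ k); split => //; exists k.
Qed.
End Loc.

Section Span.
Variable R : comPzRingType.
Definition Span (T : eqType) (A : T -> Prop) (g : T -> R) (x : R) :=
  exists l0 : seq (R * T), (forall u, u \in l0 -> A u.2) /\ x = \sum_(u <- l0) u.1 * g u.2.

Lemma span_ideal (T : eqType) (A : T -> Prop) g : is_ideal (Span A g).
Proof.
split; first by exists [::]; split => //; rewrite big_nil.
split.
  move=> x y [l1 [h1 ->]] [l2 [h2 ->]]; exists (l1 ++ l2); split; last by rewrite big_cat.
  by move=> u; rewrite mem_cat => /orP [/h1|/h2].
split.
  move=> a x [l1 [h1 ->]]; exists [seq (a * u.1, u.2) | u <- l1]; split.
    by move=> u /mapP [v vl ->]; exact: (h1 v vl).
  by rewrite big_map mulr_sumr; apply: eq_bigr => u _ /=; rewrite mulrA.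
move=> a x [l1 [h1 ->]]; exists [seq (a * u.1, u.2) | u <- l1]; split.
  by move=> u /mapP [v vl ->]; exact: (h1 v vl).
by rewrite big_map mulr_suml; apply: eq_bigr => u _ /=; ring.
Qed.

Lemma span_mem (T : eqType) (A : T -> Prop) g t : A t -> Span A g (g t).
Proof.
by move=> At; exists [:: (1, t)]; split; [move=> u; rewrite inE => /eqP -> | rewrite big_seq1 mul1r].
Qed.

Lemma ideal_sum (I : R -> Prop) (T : eqType) (l : seq T) F :
  is_ideal I -> (forall u, u \in l -> I (F u)) -> I (\sum_(u <- l) F u).
Proof.
move=> [I0 [Iadd _]]; elim: l => [|x l IH] h; first by rewrite big_nil.
rewrite big_cons; apply: Iadd; first by apply: h; rewrite inE eqxx.
by apply: IH => u ul; apply: h; rewrite inE ul orbT.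
Qed.

Lemma span_sub (I : R -> Prop) (T : eqType) (A : T -> Prop) g x :
  is_ideal I -> (forall t, A t -> I (g t)) -> Span A g x -> I x.
Proof.
move=> hI hA [l0 [hl ->]]; apply: ideal_sum => // u ul.
by case: hI => [_ [_ [Im _]]]; apply: Im; apply: hA; apply: hl.
Qed.
End Span.

Lemma unif (T : eqType) (s : seq T) (Q : nat -> T -> Prop) :
  (forall k k' x, (k <= k')%N -> Q k x -> Q k' x) ->
  (forall x, x \in s -> exists k, Q k x) -> exists k, forall x, x \in s -> Q k x.
Proof.
move=> mono; elim: s => [|a s IH] h; first by exists 0%N.
have [k0 hk0] := h a (mem_head a s).
have [k hk] := IH (fun x xs => h x (ltac:(by rewrite inE xs orbT))).
exists (maxn k0 k) => x; rewrite inE => /orP [/eqP ->|xs].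
  by apply: mono hk0; apply: leq_maxl.
by apply: mono (hk x xs); apply: leq_maxr.
Qed.

Section Mod.
Variables (R : comPzRingType) (M : lmodType R).

Lemma colon_prime (P : M -> Prop) : prime_submodule P -> prime_ideal (colon P).
Proof.
move=> [[P0 [Padd Pscale]] [[m nm] Ppr]].
split; [split; [|split; [|split]]|split].
- by move=> x; rewrite scale0r.
- by move=> a b ha hb x; rewrite scalerDl; apply: Padd.
- by move=> a x hx y; rewrite -scalerA; apply: Pscale.
- by move=> a x hx y; rewrite mulrC -scalerA; apply: Pscale.
- by move=> h; apply: nm; rewrite -[m]scale1r; apply: h.
- move=> a b hab; case: (pselect (colon P a)) => [ha|na]; first by left.
  right => y; case: (Ppr a (b *: y)) => //; by rewrite scalerA.
Qed.

Variable f : R.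

Lemma X_char (P : M -> Prop) : Xbasic f P <-> prime_submodule P /\ ~ colon P f.
Proof.
split.
- move=> [hP nV]; split => // cf; apply: nV; split => // r cr m.
  have [m' ->] := cr m; exact: cf.
- move=> [hP ncf]; split => // [[_ hV]]; apply: ncf; apply: hV => m; by exists m.
Qed.

Lemma Supp_char (p : R -> Prop) : Supp (@Xbasic R M f) p -> prime_ideal p /\ ~ p f.
Proof. by move=> [P [/X_char [hP nf] ->]]; split => //; apply: colon_prime. Qed.

Hypotheses (hfaith : faithful M) (hprimeful : primeful M)
  (hX : exists P : M -> Prop, prime_submodule P).

Lemma realize (p : R -> Prop) : prime_ideal p -> exists P : M -> Prop, prime_submodule P /\ colon P = p.
Proof.
move=> hp; case: hprimeful => [h0|hpf].
  exfalso; case: hX => P [[P0 _] [[m nm] _]]; apply: nm; by rewrite (h0 m).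
have [P [hP hc]] := hpf p hp (fun r hr => ltac:(rewrite (hfaith hr); by case: hp => [[]])).
exists P; split => //; apply/funext => r; apply/propext; exact: hc.
Qed.

Lemma Supp_intro (p : R -> Prop) : prime_ideal p -> ~ p f -> Supp (@Xbasic R M f) p.
Proof.
move=> hp nf; have [P [hP hc]] := realize hp; exists P; split => //.
by apply/X_char; split => //; rewrite hc.
Qed.

Lemma surj (N : lmodType R) (gam : (R -> Prop) -> N * R) :
  is_section (@Xbasic R M f) gam ->
  exists z : N * R, powers f z.2 /\ forall p, prime_ideal p -> ~ p f -> loc_eq (compl p) (gam p) z.
Proof.
move=> [hval hloc].
have val : forall q, prime_ideal q -> ~ q f -> ~ q (gam q).2.
  by move=> q hq nf; apply: hval; apply: Supp_intro.
pose Hb (t : R * N) := forall q, prime_ideal q -> ~ q t.1 -> ~ q f /\ loc_eq (compl q) (gam q) (t.2, t.1).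
have stA : forall q, prime_ideal q -> ~ q f -> exists t, Hb t /\ ~ q t.1.
  move=> q hq nf; have [Q [hQ hcQ]] := realize hq.
  have XQ : Xbasic f Q by apply/X_char; rewrite hcQ.
  have [W [[Wprime [L [hL hW]]] [WQ [WU [s [m hsm]]]]]] := hloc Q XQ.
  have [h [Lh nQh]] : exists h, colon L h /\ ~ colon Q h.
    have nV := (hW Q hQ).1 WQ; apply: contrapT => hn; apply: nV; split => // r Lr.
    by apply: contrapT => nr; apply: hn; exists r.
  have [nQs _] := hsm Q WQ.
  exists (s * h, h *: m); split; last by rewrite /= -hcQ; apply: prime_nmul => //; exact: colon_prime.
  move=> q' hq' /= nq'; have [P' [hP' hc']] := realize hq'; subst q'.
  have cp := colon_prime hP'.
  have nh : ~ colon P' h by move=> ch; apply: nq'; case: cp => [[_ [_ [Im _]]] _]; exact: Im.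
  have WP' : W P' by apply/(hW P' hP'); move=> [_ hv]; exact: nh (hv h Lh).
  have [_ nf'] := (X_char P').1 (WU P' WP').
  split => //; have [ns hl] := hsm P' WP'.
  apply: (loc_eq_trans (y := (m, s)) cp ns hl); exists 1; split; first by case: cp => _ [].
  rewrite /=; have -> : (1 : R) *: ((s * h) *: m - s *: (h *: m)) = 0 :> N by lcsolve m m m m.
  done.
have stB : exists e, Span Hb fst (f ^+ e).
  apply: contrapT => hn.
  have [p [hp [hsp hpe]]] := prime_exists (span_ideal Hb fst) (fun k hk => hn (ex_intro _ k hk)).
  have nf : ~ p f by move=> pf; apply: (hpe 1%N); rewrite expr1.
  have [t [Hbt nt]] := stA p hp nf; apply: nt; apply: hsp; exact: span_mem.
case: stB => e [l0 [hl0 fe]].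
pose l := [seq u.2 | u <- l0].
have Hl : forall t, t \in l -> Hb t by move=> t /mapP [u ul ->]; exact: hl0.
have cross : exists k, forall t, t \in l -> forall t', t' \in l ->
    (t.1 * t'.1) ^+ k *: (t'.1 *: t.2 - t.1 *: t'.2) = 0.
  apply: unif.
    move=> k k' t le h t' t'l; rewrite -(subnK le) exprD -scalerA (h t' t'l) scaler0 //.
  move=> t tl; apply: unif.
    move=> k k' t' le h; rewrite -(subnK le) exprD -scalerA h scaler0 //.
  move=> t' t'l; apply: (ann_pow (e := t.1 * t'.1)) => q hq nq.
  have nt : ~ q t.1 by move=> qt; apply: nq; case: hq => [[_ [_ [_ Im]]] _]; exact: Im.
  have nt' : ~ q t'.1 by move=> qt; apply: nq; case: hq => [[_ [_ [Im _]]] _]; exact: Im.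
  have [nf h1] := Hl t tl q hq nt; have [_ h2] := Hl t' t'l q hq nt'.
  exact: (loc_eq_trans hq (val q hq nf) (loc_eq_sym h1) h2).
case: cross => k hk.
pose g' (t : R * N) := t.1 ^+ k.+1.
pose b' (t : R * N) := t.1 ^+ k *: t.2.
have Hb' : forall t, t \in l -> forall q, prime_ideal q -> ~ q (g' t) ->
    ~ q f /\ loc_eq (compl q) (gam q) (b' t, g' t).
  move=> t tl q hq nq.
  have nt : ~ q t.1 by move=> qt; apply: nq; rewrite /g' exprS; case: hq => [[_ [_ [_ Im]]] _]; exact: Im.
  have [nf h1] := Hl t tl q hq nt; split => //.
  apply: (loc_eq_trans (y := (t.2, t.1)) hq nt h1); exists 1; split; first by case: hq => _ [].
  rewrite /= /g' /b' exprS; move: (t.1) (t.2) => a v; lcsolve v v v v.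
have pair' : forall t t', t \in l -> t' \in l -> g' t' *: b' t = g' t *: b' t'.
  move=> t t' tl t'l; apply/eqP; rewrite -subr_eq0; apply/eqP.
  rewrite -(hk t tl t' t'l) /g' /b' !exprS exprMn; move: (t.1) (t'.1) (t.2) (t'.2) => a a' v v'; lcsolve v v' v v.
have stF : exists e', Span (fun t => t \in l) g' (f ^+ e').
  apply: contrapT => hn.
  have [p [hp [hsp hpe]]] := prime_exists (span_ideal (fun t => t \in l) g')
     (fun k hk => hn (ex_intro _ k hk)).
  apply: (hpe e); rewrite fe; apply: ideal_sum; first by case: hp.
  move=> u ul; have hp' := hp; case: hp' => [[_ [_ [Im _]]] _]; apply: Im.
  have ul' : u.2 \in l by apply: map_f.
  have pg : p (g' u.2) by apply: hsp; exact: span_mem.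
  apply: contrapT => np; exact: (prime_nexp (k := k.+1) hp np pg).
case: stF => e' [l1 [hl1 fe']].
exists (\sum_(u <- l1) u.1 *: b' u.2, f ^+ e'); split; first by exists e'.
move=> q hq nf.
have [t [tl nt]] : exists t, t \in l /\ ~ q (g' t).
  apply: contrapT => hn; apply: (prime_nexp (k := e') hq nf); rewrite fe'.
  apply: ideal_sum; first by case: hq.
  move=> u ul; case: hq => [[_ [_ [Im _]]] _]; apply: Im.
  by apply: contrapT => nu; apply: hn; exists u.2; split => //; apply: hl1.
have [_ h1] := Hb' t tl q hq nt.
apply: (loc_eq_trans (y := (b' t, g' t)) hq nt h1); exists 1; split; first by case: hq => _ [].
rewrite /= scale1r fe' scaler_suml scaler_sumr -sumrB big1_seq // => u ul.
by rewrite [g' t *: _]scalerA [g' t * _]mulrC -[(u.1 * g' t) *: _]scalerA (pair' u.2 t (hl1 u ul) tl) scalerA subrr.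
Qed.
End Mod.

Section Main.
Variables (R : comPzRingType) (M N : lmodType R) (f : R).

Definition Rep (g : (R -> Prop) -> N * R) (z : N * R) :=
  powers f z.2 /\ forall p, prime_ideal p -> ~ p f -> loc_eq (compl p) (g p) z.

Definition phi (g : (R -> Prop) -> N * R) : N * R :=
  match pselect (exists z, Rep g z) with
  | left h => proj1_sig (cid h)
  | right _ => (0, 1)
  end.

Lemma phiP g : (exists z, Rep g z) -> Rep g (phi g).
Proof. by rewrite /phi; case: pselect => // h _; case: (cid h). Qed.

Lemma phi_val g : powers f (phi g).2.
Proof.
rewrite /phi; case: pselect => [h|_]; first by case: (cid h) => z [].
by exists 0%N; rewrite expr0.
Qed.

End Main.

Unset Implicit Arguments.
Set Strict Implicit.

Theorem proposition3p20 (R : comPzRingType) (M N : lmodType R)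
  (hfaith : faithful M) (hprimeful : primeful M)
  (hX : exists P : M -> Prop, prime_submodule P) (f : R) :
  smod_iso (sections_mod N (@Xbasic R M f)) (Nf N f).
Proof.
have Sintro := Supp_intro hfaith hprimeful hX (f := f).
have pw : forall q, prime_ideal q -> ~ q f -> forall z : N * R, powers f z.2 -> ~ q z.2.
  by move=> q hq nf z [k ->]; apply: prime_nexp.
have vq : forall x : (R -> Prop) -> N * R, is_section (@Xbasic R M f) x -> forall q : R -> Prop, prime_ideal q -> ~ q f -> ~ q (x q).2.
  move=> x hx q hq nf; case: hx => hv _; apply: hv; exact: Sintro.
have rep : forall x : (R -> Prop) -> N * R, is_section (@Xbasic R M f) x -> Rep f x (phi f x).
  by move=> x hx; apply: phiP; apply: (surj hfaith hprimeful hX hx).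
exists (phi f); split; [|split; [|split; [|split; [|split]]]].
- move=> x _; exact: phi_val.
- move=> x y hx hy /= hxy; apply: loc_inj => q hq nf.
  have [_ rx] := rep x hx; have [_ ry] := rep y hy.
  have h1 := loc_eq_trans hq (vq x hx q hq nf) (loc_eq_sym (rx q hq nf)) (hxy q (Sintro q hq nf)).
  exact: loc_eq_trans hq (vq y hy q hq nf) h1 (ry q hq nf).
- move=> x y hx hy /=.
  have [[a ea] rx] := rep x hx; have [[b eb] ry] := rep y hy.
  have hr : Rep f (fun p => loc_add (x p) (y p)) (loc_add (phi f x) (phi f y)).
    split; first by exists (a + b)%N; rewrite /= ea eb exprD.
    by move=> p hp nf; apply: loc_add_eq => //; [apply: rx|apply: ry].
  have [_ rs] := phiP (ex_intro _ _ hr); have [_ hr2] := hr.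
  apply: loc_inj => q hq nf.
  have m1 : ~ q (loc_add (x q) (y q)).2 by apply: prime_nmul => //; [exact: (vq x hx q hq nf)|exact: (vq y hy q hq nf)].
  exact: (loc_eq_trans hq m1 (loc_eq_sym (rs q hq nf)) (hr2 q hq nf)).
- move=> r x hx /=.
  have [[a ea] rx] := rep x hx.
  have hr : Rep f (fun p => loc_scale r (x p)) (loc_scale r (phi f x)).
    split; first by exists a; rewrite /= ea.
    by move=> p hp nf; apply: loc_scale_eq; apply: rx.
  have [_ rs] := phiP (ex_intro _ _ hr); have [_ hr2] := hr.
  apply: loc_inj => q hq nf.
  have m1 : ~ q (loc_scale r (x q)).2 by exact: (vq x hx q hq nf).
  exact: (loc_eq_trans hq m1 (loc_eq_sym (rs q hq nf)) (hr2 q hq nf)).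
- move=> x y hx hy /= hxy p Sp.
  have [hp nf] := Supp_char Sp.
  have [vx rx] := rep x hx; have [vy ry] := rep y hy.
  have h1 := loc_eq_trans hp (pw p hp nf _ vx) (rx p hp nf) (pow_loc hp nf hxy).
  exact: (loc_eq_trans hp (pw p hp nf _ vy) h1 (loc_eq_sym (ry p hp nf))).
- move=> z hz.
  pose x := fun _ : R -> Prop => z.
  have hxs : is_section (@Xbasic R M f) x.
    split.
      move=> p Sp; have [hp nf] := Supp_char Sp; exact: (pw p hp nf z hz).
    move=> Q XQ; exists (@Xbasic R M f); split.
      split; first by move=> P [].
      exists (@scaled_module R M f); split.
        split; first by exists 0; rewrite scaler0.
        split; first by move=> a b [m ->] [m' ->]; exists (m + m'); rewrite scalerDr.
        by move=> r a [m ->]; exists (r *: m); rewrite !scalerA mulrC.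
      by move=> P hP; split; [case | move=> nV; split].
    split => //; split => //; exists z.2, z.1 => P XP.
    move: (XP) => /X_char [hP ncf]; have cp := colon_prime hP.
    split; first exact: (pw (colon P) cp ncf z hz).
    rewrite /x; have -> : (z.1, z.2) = z by case: (z).
    by apply: loc_eq_refl; case: cp => _ [].
  exists x; split => //.
  apply: loc_inj => q hq nf; have [_ rx] := rep x hxs; exact: (loc_eq_sym (rx q hq nf)).
Qed.
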